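(* Let $[\mu]\in\mathbb PV_n$ be a critical point of $F_n$ with $\mathrm M_\mu=c_\mu I+D_\mu$, $c_\mu\in\mathbb R$, $D_\mu\in\mathrm{Der}(\mu)$. Then $\operatorname{tr}D_\mu=0$ if and only if $D_\mu=0$.
   Context: $V_n$ is the space of bilinear maps $\mu:\mathbb C^n\times\mathbb C^n\to\mathbb C^n$ with the standard Hermitian structures. $L^\mu_XY=\mu(X,Y)$, $R^\mu_XY=\mu(Y,X)$, and for an orthonormal basis $\{X_i\}$, $\mathrm M_\mu=2\sum_i L^\mu_{X_i}(L^\mu_{X_i})^*-2\sum_i (L^\mu_{X_i})^*L^\mu_{X_i}-2\sum_i (R^\mu_{X_i})^*R^\mu_{X_i}$ (a Hermitian matrix). $F_n([\mu])=\operatorname{tr}\mathrm M_\mu^2/\|\mu\|^4$; $[\mu]$ is a critical point of $F_n$ iff $\mathrm M_\mu=c_\mu I+D_\mu$ with $c_\mu\in\mathbb R$ and $D_\mu$ a derivation of $\mu$. *)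

(* Defs.v *)
(* complex numbers C = R[i] over a real closed field R
   (for R the real numbers this is the usual complex field). *)
From HB Require Import structures.
From mathcomp Require Import all_boot all_order all_algebra.
From mathcomp Require Import complex.
Set Implicit Arguments. Unset Strict Implicit. Unset Printing Implicit Defensive.
Import Order.TTheory GRing.Theory Num.Theory.
Local Open Scope ring_scope.

(* An element mu of V_n (a bilinear map C^n x C^n -> C^n) is given by its
   values on the standard (orthonormal) basis: mu i j = mu(e_i, e_j). *)
Definition bilin (R : rcfType) (n : nat) := 'I_n -> 'I_n -> 'cV[R[i]]_n.

Definition mu_app (R : rcfType) (n : nat) (mu : bilin R n)
  (X Y : 'cV[R[i]]_n) : 'cV[R[i]]_n :=
  \sum_(i < n) \sum_(j < n) (X i 0 * Y j 0) *: mu i j.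

(* Matrices of L^mu_{e_i} (Y |-> mu(e_i,Y)) and R^mu_{e_i} (Y |-> mu(Y,e_i)). *)
Definition Lmx (R : rcfType) (n : nat) (mu : bilin R n) (i : 'I_n) : 'M[R[i]]_n :=
  \matrix_(k, j) mu i j k 0.
Definition Rmx (R : rcfType) (n : nat) (mu : bilin R n) (i : 'I_n) : 'M[R[i]]_n :=
  \matrix_(k, j) mu j i k 0.

Definition adj (R : rcfType) (n : nat) (A : 'M[R[i]]_n) : 'M[R[i]]_n :=
  (map_mx Num.conj A)^T.

Definition Mmu (R : rcfType) (n : nat) (mu : bilin R n) : 'M[R[i]]_n :=
  2%:R *: (\sum_(i < n) Lmx mu i *m adj (Lmx mu i))
  - 2%:R *: (\sum_(i < n) adj (Lmx mu i) *m Lmx mu i)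
  - 2%:R *: (\sum_(i < n) adj (Rmx mu i) *m Rmx mu i).

Definition is_derivation (R : rcfType) (n : nat) (mu : bilin R n)
  (D : 'M[R[i]]_n) : Prop :=
  forall X Y : 'cV[R[i]]_n,
    D *m mu_app mu X Y = mu_app mu (D *m X) Y + mu_app mu X (D *m Y).

(* mu is nonzero (so that [mu] is a point of PV_n). *)
Definition bilin_nonzero (R : rcfType) (n : nat) (mu : bilin R n) : Prop :=
  exists i j, mu i j != 0.

(* Main.v *)
Require Import Defs.
From HB Require Import structures.
From mathcomp Require Import all_boot all_order all_algebra.
From mathcomp Require Import complex.
From mathcomp Require Import ring.
Import Order.TTheory GRing.Theory Num.Theory.
Local Open Scope ring_scope.
Local Open Scope complex_scope.


Section Perm.
Variables (T : nmodType) (m : nat).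
Implicit Type F : 'I_m -> 'I_m -> 'I_m -> 'I_m -> T.
Lemma s23 F : \sum_a \sum_b \sum_c \sum_d F a b c d = \sum_a \sum_c \sum_b \sum_d F a b c d.
Proof. by apply: eq_bigr => x _; rewrite exchange_big. Qed.
Lemma s34 F : \sum_a \sum_b \sum_c \sum_d F a b c d = \sum_a \sum_b \sum_d \sum_c F a b c d.
Proof. by apply: eq_bigr => x _; apply: eq_bigr => y _; rewrite exchange_big. Qed.
Lemma s12 F : \sum_a \sum_b \sum_c \sum_d F a b c d = \sum_b \sum_a \sum_c \sum_d F a b c d.
Proof. by rewrite exchange_big. Qed.
Lemma permA F : \sum_l \sum_k \sum_i \sum_j F l k i j = \sum_i \sum_j \sum_k \sum_l F l k i j.
Proof.
rewrite (s23 F) (s34 (fun a b c d => F a c b d)) (s12 (fun a b c d => F a d b c)).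
by rewrite (s23 (fun a b c d => F b d a c)) (s34 (fun a b c d => F c d a b)).
Qed.
Lemma permB F : \sum_l \sum_k \sum_i \sum_j F l k i j = \sum_i \sum_l \sum_j \sum_k F l k i j.
Proof. by rewrite (s23 F) (s34 (fun a b c d => F a c b d)) (s12 (fun a b c d => F a d b c)). Qed.
Lemma permC F : \sum_l \sum_k \sum_i \sum_j F l k i j = \sum_l \sum_i \sum_j \sum_k F l k i j.
Proof. by rewrite (s23 F) (s34 (fun a b c d => F a c b d)). Qed.
End Perm.

Section S.
Variables (R : rcfType) (n : nat) (mu : bilin R n).
Local Notation a i j k := (mu i j k 0).
Local Notation cj := (@Num.conj _).

Lemma mu_app_dr (X : 'cV[R[i]]_n) j : mu_app mu X (delta_mx j 0) = \sum_p X p 0 *: mu p j.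
Proof.
rewrite /mu_app; apply: eq_bigr => p _.
rewrite (bigD1 j) //= big1 ?addr0; first by rewrite mxE !eqxx mulr1.
by move=> q /negbTE qj; rewrite mxE qj mulr0 scale0r.
Qed.

Lemma mu_app_dl (Y : 'cV[R[i]]_n) i : mu_app mu (delta_mx i 0) Y = \sum_q Y q 0 *: mu i q.
Proof.
rewrite /mu_app (bigD1 i) //= [X in _ + X]big1 ?addr0.
  by apply: eq_bigr => q _; rewrite mxE !eqxx mul1r.
by move=> p /negbTE pi; apply: big1 => q _; rewrite mxE pi mul0r scale0r.
Qed.

Lemma mulmx_delta (D : 'M[R[i]]_n) i m : (D *m (delta_mx i 0 : 'cV_n)) m 0 = D m i.
Proof.
rewrite mxE (bigD1 i) //= big1 ?addr0; first by rewrite mxE !eqxx mulr1.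
by move=> k /negbTE ki; rewrite mxE ki mulr0.
Qed.

Lemma deriv_entry (D : 'M[R[i]]_n) : is_derivation mu D -> forall i j l,
  \sum_k D l k * a i j k = \sum_m D m i * a m j l + \sum_m D m j * a i m l.
Proof.
move=> H i j l.
have Hij : mu_app mu (delta_mx i 0) (delta_mx j 0) = mu i j.
  rewrite mu_app_dr (bigD1 i) //= big1 ?addr0; first by rewrite mxE !eqxx scale1r.
  by move=> p /negbTE pi; rewrite mxE pi scale0r.
have := congr1 (fun M : 'cV[R[i]]_n => M l 0) (H (delta_mx i 0) (delta_mx j 0)).
rewrite Hij mu_app_dr mu_app_dl !mxE !summxE.
by move=> ->; congr (_ + _); apply: eq_bigr => m _; rewrite mxE mulmx_delta.
Qed.

Definition X1 l k := \sum_i \sum_j a i j l * cj (a i j k).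
Definition X2 l k := \sum_i \sum_j cj (a i l j) * a i k j.
Definition X3 l k := \sum_i \sum_j cj (a l i j) * a k i j.

Lemma Mmu_entry l k : Mmu mu l k = 2%:R * X1 l k - 2%:R * X2 l k - 2%:R * X3 l k.
Proof.
rewrite /Mmu !mxE !summxE /X1 /X2 /X3.
congr (_ * _ - _ * _ - _ * _); apply: eq_bigr => i _; rewrite mxE;
  apply: eq_bigr => j _; rewrite /adj !mxE //.
Qed.

Lemma Mmu_herm l k : Mmu mu l k = cj (Mmu mu k l).
Proof.
rewrite !Mmu_entry !rmorphB !rmorphM /= conjC_nat /X1 /X2 /X3 !rmorph_sum /=.
congr (_ * _ - _ * _ - _ * _); apply: eq_bigr => i _; rewrite rmorph_sum;
  apply: eq_bigr => j _; rewrite rmorphM /= mulrC; congr (_ * _); apply/esym; exact: conjCK.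
Qed.

Section Tr.
Variable D : 'M[R[i]]_n.
Hypothesis HD : is_derivation mu D.
Definition SS (X : 'I_n -> 'I_n -> R[i]) := \sum_l \sum_k X l k * D k l.
Definition T2 := \sum_i \sum_j \sum_k \sum_m cj (a i j k) * (D m j * a i m k).
Definition T3 := \sum_i \sum_j \sum_k \sum_m cj (a i j k) * (D m i * a m j k).

Lemma SX2 : SS X2 = T2.
Proof.
have -> : SS X2 = \sum_l \sum_k \sum_i \sum_j cj (a i l j) * a i k j * D k l.
  by apply: eq_bigr => l _; apply: eq_bigr => k _; rewrite /X2 mulr_suml;
    apply: eq_bigr => i _; rewrite mulr_suml.
rewrite permB; do 4! (apply: eq_bigr => ? _); ring.
Qed.

Lemma SX3 : SS X3 = T3.
Proof.
have -> : SS X3 = \sum_l \sum_k \sum_i \sum_j cj (a l i j) * a k i j * D k l.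
  by apply: eq_bigr => l _; apply: eq_bigr => k _; rewrite /X3 mulr_suml;
    apply: eq_bigr => i _; rewrite mulr_suml.
rewrite permC; do 4! (apply: eq_bigr => ? _); ring.
Qed.

Lemma SX1 : SS X1 = T3 + T2.
Proof.
have -> : SS X1 = \sum_l \sum_k \sum_i \sum_j a i j l * cj (a i j k) * D k l.
  by apply: eq_bigr => l _; apply: eq_bigr => k _; rewrite /X1 mulr_suml;
    apply: eq_bigr => i _; rewrite mulr_suml.
rewrite permA /T3 /T2 -big_split; apply: eq_bigr => i _.
rewrite -big_split; apply: eq_bigr => j _.
rewrite -big_split; apply: eq_bigr => k _.
have -> : \sum_l a i j l * cj (a i j k) * D k l = cj (a i j k) * \sum_l D k l * a i j l.
  by rewrite mulr_sumr; apply: eq_bigr => l _; ring.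
by rewrite deriv_entry // mulrDr !mulr_sumr.
Qed.

Lemma tr_MD : \tr (Mmu mu *m D) = 0.
Proof.
have -> : \tr (Mmu mu *m D) = 2%:R * SS X1 - 2%:R * SS X2 - 2%:R * SS X3.
  rewrite /mxtrace /SS !mulr_sumr -!sumrB; apply: eq_bigr => l _.
  rewrite mxE !mulr_sumr -!sumrB; apply: eq_bigr => k _.
  rewrite Mmu_entry; ring.
rewrite SX1 SX2 SX3; ring.
Qed.
End Tr.
End S.

Lemma creal (R : rcfType) (c : R) : Num.conj (c%:C) = c%:C.
Proof. apply/eqP; rewrite -CrealE realE !lecR; exact: le_total. Qed.

Theorem mainTheorem6 (R : rcfType) (n : nat) (mu : bilin R n)
  (c : R) (D : 'M[R[i]]_n) :
  bilin_nonzero mu ->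
  is_derivation mu D ->
  Mmu mu = (c%:C)%:M + D ->
  (\tr D = 0 <-> D = 0).
Proof.
move=> _ HD HM; split; last by move=> ->; rewrite mxtrace0.
move=> trD0.
have h := @tr_MD R n mu D HD.
rewrite HM mulmxDl mul_scalar_mx mxtraceD mxtraceZ trD0 mulr0 add0r in h.
have HD' : D = Mmu mu - (c%:C)%:M by rewrite HM [_ + D]addrC addrK.
have herm : forall l k, D k l = Num.conj (D l k).
  have subE : forall (A B : 'M[R[i]]_n) x y, (A - B) x y = A x y - B x y.
    by move=> *; rewrite !mxE.
  have scE : forall x y, ((c%:C)%:M : 'M[R[i]]_n) x y = c%:C *+ (x == y).
    by move=> *; rewrite !mxE.
  move=> l k; rewrite HD' (subE (Mmu mu)) (subE (Mmu mu)) (@Mmu_herm R n mu k l) !scE rmorphB rmorphMn /= creal eq_sym //.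
have h2 : \sum_l \sum_k `|D l k| ^+ 2 = 0.
  rewrite -[RHS]h /mxtrace; apply: eq_bigr => l _; rewrite mxE; apply: eq_bigr => k _.
  by rewrite normCK -herm.
apply/matrixP => l k; rewrite mxE.
have ge : forall (x : R[i]), 0 <= `|x| ^+ 2 by move=> x; rewrite exprn_ge0.
have hl := psumr_eq0P (fun l _ => sumr_ge0 _ (fun k _ => ge (D l k))) h2 (i:=l) isT.
have hk := psumr_eq0P (fun k _ => ge (D l k)) hl (i:=k) isT.
by move/eqP: hk; rewrite sqrf_eq0 normr_eq0 => /eqP.
Qed.
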